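(* For every $k=1,\dots,t$ and every $j$ with $0\le j<\deg P^{(k)}_2$, $$\bar S_{k,j}(F,G)=(R'_{k-1})^{b_{k,j}}\,r_{k,j}\,\tilde S_{k,j}(F,G).$$
   Context: Let $K$ be a field of characteristic zero; $|M|$ denotes the determinant of a square matrix $M$; $\mathrm{lc}$ and $\deg$ denote leading coefficient and degree. Subresultant matrices. Let $A=a_px^p+\dots+a_0$, $B=b_qx^q+\dots+b_0$ over $K$ regarded with formal degrees $p\ge q>0$. For $0\le j<q$, $N^{(j)}(A,B)$ is the $(p+q-j)\times(p+q-2j)$ matrix whose $c$-th column ($c=1,\dots,q-j$) has $a_p,\dots,a_0$ in rows $c,\dots,c+p$ and zeros elsewhere, and whose $(q-j+c)$-th column ($c=1,\dots,p-j$) has $b_q,\dots,b_0$ in rows $c,\dots,c+q$ and zeros elsewhere. PRS. For nonzero $A,B\in K[x]$, $\deg A>\deg B$, a PRS is $(P_1,\dots,P_l)$, nonzero polynomials, $P_1=A$, $P_2=B$, $\deg P_{i-1}>\deg P_i$, $\alpha_iP_{i-2}=q_{i-1}P_{i-1}+\beta_iP_i$ ($i=3,\dots,l$) with $\alpha_i,\beta_i\in K\setminus\{0\}$, $q_{i-1}\in K[x]$, and $P_l=\gamma\gcd(A,B)$, $0\ne\gamma\in K$. Recursive PRS. $F=f_mx^m+\dots+f_0$, $G=g_nx^n+\dots+g_0\in K[x]$, $f_mg_n\ne0$, $m>n>0$. A complete recursive PRS consists of PRSs $(P^{(k)}_1,\dots,P^{(k)}_{l_k})$, $k=1,\dots,t$,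 $P^{(1)}_1=F$, $P^{(1)}_2=G$, for $k\ge2$ $P^{(k)}_1=P^{(k-1)}_{l_{k-1}}$, $P^{(k)}_2=\frac d{dx}P^{(k)}_1$; $P^{(k)}_{l_k}$ non-constant for $k<t$, $P^{(t)}_{l_t}$ constant. Assume $l_k\ge3$ for $k<t$. Notation: $n^{(k)}_i=\deg P^{(k)}_i$, $j_0=m$, $j_k=n^{(k)}_{l_k}$. Recursive subresultants ($0\le j<n^{(k)}_2$): $\bar N^{(1,j)}=N^{(j)}(F,G)$; for $k\ge2$, with $\bar N=\bar N^{(k-1,j_{k-1})}$ having $C$ columns, $\bar N_U$ = $\bar N$ minus its bottom $j_{k-1}+1$ rows, $\bar N_L$ = its bottom $j_{k-1}+1$ rows, $\bar N'_L$ = the $j_{k-1}\times C$ matrix whose $i$-th row is $(j_{k-1}+1-i)$ times row $i$ of $\bar N_L$, and $b=2j_{k-1}-2j-1$, $e=j_{k-1}-j-1$: $\bar N^{(k,j)}$ has $bC$ columns in $b$ blocks of width $C$, upper part $\mathrm{diag}(\bar N_U,\dots,\bar N_U)$ ($b$ copies), and a lower part of $2j_{k-1}-j-1$ rows in which column block $s$ ($s=1,\dots,e$) holds $\bar N_L$ in lower rows $s,\dots,s+j_{k-1}$ and column block $e+s$ ($s=1,\dots,j_{k-1}-j$) holds $\bar N'_L$ in lower rows $s,\dots,s+j_{k-1}-1$; other entries $0$. If $\bar N^{(k,j)}$ has $D$ columns, $\bar N^{(k,j)}_\tau$ ($\tau=0,\dots,j$) is formed by its top $D-1$ rows and its $(D+j-\tau)$-th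 row, and $\bar S_{k,j}(F,G)=\sum_{\tau=0}^j|\bar N^{(k,j)}_\tau|x^\tau$. Nested subresultants ($0\le j<n^{(k)}_2$): $\tilde N^{(1,j)}=N^{(j)}(F,G)$; for $k\ge2$, $\tilde N^{(k,j)}=N^{(j)}\big(\tilde S_{k-1,j_{k-1}}(F,G),\frac d{dx}\tilde S_{k-1,j_{k-1}}(F,G)\big)$ with formal degrees $j_{k-1}$ and $j_{k-1}-1$. $\tilde N^{(k,j)}_\tau$ is formed by the top $n^{(k)}_1+n^{(k)}_2-2j-1$ rows and the $(n^{(k)}_1+n^{(k)}_2-j-\tau)$-th row of $\tilde N^{(k,j)}$, and $\tilde S_{k,j}(F,G)=\sum_{\tau=0}^j|\tilde N^{(k,j)}_\tau|x^\tau$. Constants. For $k\ge2$: $b_{k,j}=2j_{k-1}-2j-1$, $u_{k,j}=(m+n-2j_1)\{\prod_{l=2}^{k-1}(2j_{l-1}-2j_l-1)\}b_{k,j}$, $r_{k,j}=(-1)^{(u_{k-1}-1)(1+2+\dots+(b_{k,j}-1))}$; $b_{1,j}=r_{1,j}=1$, $u_1=m+n-2j_1$; $b_k=b_{k,j_k}$, $u_k=u_{k,j_k}$, $r_k=r_{k,j_k}$. $R'_0=1$ and $R'_k=(R'_{k-1})^{b_k}r_k$ for $k=1,\dots,t-1$ (so $R'_1=1$). *)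

(* Defs.v *)
From HB Require Import structures.
From mathcomp Require Import all_boot all_order all_algebra.
Set Implicit Arguments. Unset Strict Implicit. Unset Printing Implicit Defensive.
Import Order.TTheory GRing.Theory Num.Theory.
Local Open Scope ring_scope.

(* Matrices of varying size are represented by their entry functions
   nat -> nat -> K (0-indexed row, column), together with explicit sizes. *)

Section Defs.
Variable K : fieldType.

(* Entries of N^{(j)}(A,B), formal degrees p >= q; 0-indexed row r, column c.
   Size: (p+q-j) rows, (p+q-2j) columns. *)
Definition sylv_ent (A B : {poly K}) (p q j : nat) (r c : nat) : K :=
  if ((r < p + q - j) && (c < p + q - 2 * j))%N then
    if (c < q - j)%N then
      (if (c <= r <= c + p)%N then A`_(p - (r - c)) else 0)
    else
      let c' := (c - (q - j))%N in
      (if (c' <= r <= c' + q)%N then B`_(q - (r - c')) else 0)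
  else 0.

(* Given a matrix M with D columns, sum_{tau=0}^{j} |M_tau| x^tau, where M_tau
   consists of the top D-1 rows and the (D+j-tau)-th row (1-indexed) of M. *)
Definition subres_of (M : nat -> nat -> K) (D j : nat) : {poly K} :=
  \sum_(tau < j.+1)
     \det (\matrix_(a < D, c < D)
             M (if (a < D.-1)%N then (a : nat) else (D + j - tau).-1)%N c)
     *: 'X^tau.

(* Entries of \bar N^{(k,j)} built from \bar N = \bar N^{(k-1,J)}, J = j_{k-1},
   which has C columns (and C + J rows), entry function M. *)
Definition bar_step (J j C : nat) (M : nat -> nat -> K) (r c : nat) : K :=
  let b := (2 * J - 2 * j - 1)%N in
  let e := (J - j - 1)%N in
  let sb := (c %/ C)%N in
  let lc := (c %% C)%N in
  if ((c < b * C) && (r < b * C.-1 + (2 * J - j - 1)))%N then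
    if (r < b * C.-1)%N then
      (* upper part: diag(N_U, ..., N_U) *)
      (if (r %/ C.-1 == sb)%N then M (r %% C.-1)%N lc else 0)
    else
      let i := (r - b * C.-1)%N in
      if (sb < e)%N then
        (* block sb+1 holds N_L in lower rows sb+1 .. sb+1+J (1-indexed) *)
        (if (sb <= i <= sb + J)%N then M (C.-1 + (i - sb))%N lc else 0)
      else
        let t' := (sb - e)%N in
        (* block e+t'+1 holds N'_L in lower rows t'+1 .. t'+J (1-indexed);
           row l (1-indexed) of N'_L is (J+1-l) times row l of N_L *)
        (if (t' <= i <= t' + J.-1)%N
         then (J - (i - t'))%:R * M (C.-1 + (i - t'))%N lc else 0)
  else 0.

Variables (F G : {poly K}) (m n : nat) (js : nat -> nat).
(* js k = j_k, with js 0 = j_0 = m. Indices k follow the paper (k >= 1). *)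

(* (number of columns, entry function) of \bar N^{(k,j)} *)
Fixpoint barN (k j : nat) : nat * (nat -> nat -> K) :=
  match k with
  | 0 | 1 => ((m + n - 2 * j)%N, sylv_ent F G m n j)
  | k'.+1 =>
      let J := js k' in
      let: (C, M) := barN k' J in
      (((2 * J - 2 * j - 1) * C)%N, bar_step J j C M)
  end.

Definition barS (k j : nat) : {poly K} :=
  let: (D, M) := barN k j in subres_of M D j.

Fixpoint tildeS (k j : nat) : {poly K} :=
  match k with
  | 0 | 1 => subres_of (sylv_ent F G m n j) (m + n - 2 * j) j
  | k'.+1 =>
      let J := js k' in
      let T := tildeS k' J in
      subres_of (sylv_ent T T^`() J J.-1 j) (J + J.-1 - 2 * j) j
  end.

Definition bkj (k j : nat) : nat :=
  if (k <= 1)%N then 1%N else (2 * js k.-1 - 2 * j - 1)%N.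

Definition ukj (k j : nat) : nat :=
  if (k <= 1)%N then (m + n - 2 * js 1)%N
  else ((m + n - 2 * js 1) *
        (\prod_(2 <= l < k) (2 * js l.-1 - 2 * js l - 1)) * bkj k j)%N.
Definition uk (k : nat) : nat := ukj k (js k).

Definition rkj (k j : nat) : K :=
  if (k <= 1)%N then 1
  else (-1) ^+ ((uk k.-1 - 1) * (\sum_(1 <= i < bkj k j) i))%N.

Fixpoint Rp (k : nat) : K :=
  match k with
  | 0 => 1
  | k'.+1 => Rp k' ^+ bkj k (js k) * rkj k (js k)
  end.

End Defs.
Arguments Rp {K} m n js k.
Arguments rkj {K} m n js k j.

Section PRS.
Variable K : fieldType.

(* (P_1, ..., P_l) = s is a PRS for A, B (0-indexed in s). *)
Definition is_PRS (A B : {poly K}) (s : seq {poly K}) : Prop :=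
  [/\ (2 <= size s)%N /\ nth 0 s 0 = A /\ nth 0 s 1 = B,
      all (fun P => P != 0) s,
      (forall i, (i.+1 < size s)%N -> (size (nth (0%R : {poly K}) s i.+1) < size (nth (0%R : {poly K}) s i))%N),
      (forall i, (2 <= i < size s)%N ->
         exists (alpha beta : K) (q : {poly K}),
           [/\ alpha != 0, beta != 0 &
               alpha *: nth 0 s (i - 2) = q * nth 0 s i.-1 + beta *: nth 0 s i])
    & exists gamma : K, gamma != 0 /\ last 0 s = gamma *: gcdp A B].

(* complete recursive PRS (Ps k for k = 1..t), with l_k >= 3 for k < t *)
Definition is_complete_rPRS (F G : {poly K}) (t : nat) (Ps : nat -> seq {poly K}) : Prop :=
  [/\ (1 <= t)%N /\ is_PRS F G (Ps 1%N),
      (forall k, (2 <= k <= t)%N ->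
         is_PRS (last 0 (Ps k.-1)) (last 0 (Ps k.-1))^`() (Ps k)),
      (forall k, (1 <= k < t)%N -> (1 < size (last (0%R : {poly K}) (Ps k)))%N),
      (size (last (0%R : {poly K}) (Ps t)) <= 1)%N
    & (forall k, (1 <= k < t)%N -> (3 <= size (Ps k))%N)].

Definition jseq (m : nat) (Ps : nat -> seq {poly K}) (k : nat) : nat :=
  if k is 0 then m else (size (last 0 (Ps k))).-1.

End PRS.

(* Main.v *)
Require Import Defs.
From HB Require Import structures.
From mathcomp Require Import all_boot all_order all_algebra.
Set Implicit Arguments. Unset Strict Implicit. Unset Printing Implicit Defensive.
Import Order.TTheory GRing.Theory Num.Theory.
From Stdlib Require Import Lia.
Ltac tolia := repeat match goal with H : is_true (leq _ _) |- _ =>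
    let H' := fresh "HL" in have H' := elimT ssrnat.leP H; clear H;
    rewrite -?subn1 -?plusE -?minusE -?multE in H' end;
  try apply/ssrnat.leP; rewrite -?subn1 -?plusE -?minusE -?multE; lia.
Local Open Scope ring_scope.

Section DetN.
Variable K : fieldType.

Definition detn (n : nat) (f : nat -> nat -> K) : K :=
  \det (\matrix_(a < n, x < n) f a x).

Lemma detn_ext n f g : (forall a x, (a < n)%N -> (x < n)%N -> f a x = g a x) ->
  detn n f = detn n g.
Proof.
move=> H; rewrite /detn; congr (\det _); apply/matrixP => a x; rewrite !mxE.
exact: H.
Qed.

Lemma detn_row n f (r0 : nat) : (r0 < n.+1)%N ->
  detn n.+1 f = \sum_(x < n.+1) (-1) ^+ (r0 + x) * f r0 x *
     detn n (fun a y => f (bump r0 a) (bump x y)).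
Proof.
move=> lt; rewrite /detn (expand_det_row _ (Ordinal lt)).
apply: eq_bigr => x _; rewrite mxE /cofactor /= mulrCA mulrA [_ * f _ _]mulrC.
congr (_ * \det _); apply/matrixP => a y; rewrite !mxE //.
Qed.

Lemma detn_col n f (x0 : nat) : (x0 < n.+1)%N ->
  detn n.+1 f = \sum_(r < n.+1) (-1) ^+ (r + x0) * f r x0 *
     detn n (fun a y => f (bump r a) (bump x0 y)).
Proof.
move=> lt; rewrite /detn (expand_det_col _ (Ordinal lt)).
apply: eq_bigr => x _; rewrite mxE /cofactor /= mulrCA mulrA [_ * f _ _]mulrC.
congr (_ * \det _); apply/matrixP => a y; rewrite !mxE //.
Qed.

Lemma detn_zero_row n f r0 : (r0 < n)%N -> (forall x, (x < n)%N -> f r0 x = 0) ->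
  detn n f = 0.
Proof.
case: n => [//|n] lt H; rewrite (detn_row _ lt) big1 // => x _.
by rewrite H // mulr0 mul0r.
Qed.

Lemma detn_scale_row n f r0 (s : K) : (r0 < n)%N ->
  detn n (fun a x => if a == r0 then s * f a x else f a x) = s * detn n f.
Proof.
case: n => [//|n] lt; rewrite !(detn_row _ lt) mulr_sumr; apply: eq_bigr => x _.
rewrite eqxx mulrCA !mulrA; congr (_ * _ * _).
apply: detn_ext => a y _ _; rewrite eq_sym (negbTE (neq_bump _ _)) //.
Qed.

Lemma detn_scale n f (s : K) :
  detn n (fun a x => s * f a x) = s ^+ n * detn n f.
Proof.
rewrite /detn -detZ; congr (\det _); apply/matrixP => a x; rewrite !mxE //.
Qed.

Lemma detn1 f : detn 1 f = f 0%N 0%N.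
Proof. by rewrite /detn det_mx11 mxE. Qed.

Lemma detn0 f : detn 0 f = 1.
Proof. by rewrite /detn det_mx00. Qed.


Lemma bump0n n : bump 0 n = n.+1.
Proof. by rewrite /bump leq0n add1n. Qed.

Lemma GL c N f : (forall r x, (r < c)%N -> (c < x)%N -> f r x = 0) ->
  detn (c + N).+1 f = \sum_(i < N.+1) (-1) ^+ i *
     detn c.+1 (fun a x => f (if (a < c)%N then a else c + i)%N x) *
     detn N (fun a y => f (c + bump i a)%N (c.+1 + y)%N).
Proof.
elim: c f => [|c IH] f Hf.
  rewrite add0n (detn_col _ (ltn0Sn N)); apply: eq_bigr => i _.
  rewrite addn0 detn1 /=; congr (_ * _ * _); apply: detn_ext => a y _ _.
rewrite addSn (detn_row _ (ltn0Sn _)).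
have le : (c.+2 <= (c + N).+2)%N by rewrite !ltnS leq_addr.
pose F (x : nat) := (-1) ^+ (0 + x) * f 0%N x *
   detn (c + N).+1 (fun a y => f (bump 0 a) (bump x y)).
transitivity (\sum_(x < c.+2) F x).
  rewrite (big_ord_widen _ F le) [RHS]big_mkcond /=; apply: eq_bigr => x _.
  case: ifP => // /negbT; rewrite -leqNgt => Hx.
  by rewrite /F Hf ?mulr0 ?mul0r.
rewrite {}/F.
transitivity (\sum_(x < c.+2) \sum_(i < N.+1) (-1) ^+ x * f 0%N x * ((-1) ^+ i *
     detn c.+1 (fun a y => f (bump 0 (if (a < c)%N then a else c + i)%N) (bump x y)) *
     detn N (fun a y => f (c.+1 + bump i a)%N (c.+2 + y)%N))).
  apply: eq_bigr => x _; rewrite -mulr_sumr; congr (_ * _).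
  rewrite IH; last first.
    move=> r y Hr Hy; apply: Hf; first by rewrite bump0n ltnS.
    rewrite /bump; case: (leqP x y) => Hxy.
      by rewrite add1n ltnS.
    have := leq_ltn_trans Hxy (ltn_ord x); rewrite !ltnS => H; by move: (leq_trans Hy H); rewrite ltnn.
  apply: eq_bigr => i _; congr (_ * _ * _); apply: detn_ext => a y _ Hy.
  rewrite bump0n /bump; case: x => x /= Hx; rewrite (leq_trans _ (leq_addr _ _)) -1?ltnS //.
rewrite exchange_big /=; apply: eq_bigr => i _.
have perm5 (a b c' d e : K) : a * b * (c' * d * e) = c' * (a * b * d) * e.
  by rewrite !mulrA [a * b * c']mulrC !mulrA.
under eq_bigr => x _ do rewrite perm5.
rewrite -mulr_suml -mulr_sumr; congr (_ * _ * _).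
rewrite [RHS](detn_row _ (ltn0Sn _)); apply: eq_bigr => x _.
rewrite /=; congr (_ * _); apply: detn_ext => a y _ _.
by rewrite bump0n ltnS; case: (a < c)%N.
Qed.

Lemma divDl_self d m : (0 < d)%N -> ((d + m) %/ d = (m %/ d).+1)%N.
Proof. by move=> d0; rewrite -{1}(mul1n d) divnMDl. Qed.

Definition Wb (b c : nat) (U L : nat -> nat -> K) (r x : nat) : K :=
  if (r < b * c)%N then (if (r %/ c == x %/ c.+1)%N then U (r %% c)%N (x %% c.+1)%N else 0)
  else L (r - b * c)%N x.

Definition Mp (c : nat) (U L : nat -> nat -> K) (i s : nat) : K :=
  detn c.+1 (fun a x => if (a < c)%N then U a x else L i (s * c.+1 + x)%N).

Lemma BL b c U L : detn (b * c.+1) (Wb b c U L) =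
  (-1) ^+ (c * \sum_(i < b) i) * detn b (Mp c U L).
Proof.
elim: b L => [|b IH] L.
  by rewrite mul0n !detn0 big_ord0 muln0 expr0 mulr1.
have Esz : (b.+1 * c.+1 = (c + b * c.+1).+1)%N by rewrite mulSn addSn.
rewrite Esz GL; last first.
  move=> r x Hr Hx; rewrite /Wb (leq_trans Hr) ?mulSn ?leq_addr //.
  rewrite divn_small // ifF //; apply/negbTE; rewrite eq_sym -lt0n divn_gt0 //.
have -> : ((b * c.+1).+1 = b * c + b.+1)%N by rewrite mulnS addnC addnS.
rewrite big_split_ord /= big1 ?add0r; last first.
  move=> i _; have Hi := ltn_ord i.
  rewrite (@detn_zero_row _ _ c) ?mulr0 ?mul0r // => x Hx.
  rewrite ltnn /Wb.
  have := leq_ltn_trans (leq0n _) Hi; rewrite muln_gt0 => /andP[_ c0].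
  have -> : (c + i < b.+1 * c)%N by rewrite mulSn ltn_add2l.
  by rewrite (divn_small Hx) -{1}(mul1n c) divnMDl // add1n.
rewrite [detn b.+1 _](detn_col _ (ltn0Sn b)) mulr_sumr; apply: eq_bigr => i _.
have E1 : detn c.+1 (fun a x => Wb b.+1 c U L (if (a < c)%N then a else c + (b * c + i))%N x)
    = Mp c U L i 0.
  apply: detn_ext => a x Ha Hx; rewrite /Wb; case: (ltnP a c) => Hac.
    have -> : (a < b.+1 * c)%N by rewrite (leq_trans Hac) // mulSn leq_addr.
    by rewrite !divn_small // eqxx !modn_small.
  rewrite ifF; last by apply/negbTE; rewrite -leqNgt mulSn addnA leq_addr.
  by rewrite mul0n add0n mulSn addnA addKn.
pose L' r y := L (bump i r) (c.+1 + y)%N.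
have E2 : detn (b * c.+1) (fun a y => Wb b.+1 c U L (c + bump (b * c + i) a) (c.+1 + y)%N)
    = detn (b * c.+1) (Wb b c U L').
  apply: detn_ext => a y Ha Hy; rewrite /Wb /L'; case: (ltnP a (b * c)) => Hab.
    have := leq_ltn_trans (leq0n _) Hab; rewrite muln_gt0 => /andP[_ c0].
    have Hb : bump (b * c + i) a = a.
      by rewrite /bump leqNgt (leq_trans Hab) // leq_addr.
    rewrite Hb mulSn ltn_add2l Hab.
    by rewrite !divDl_self ?ltn0Sn // eqSS !modnDl.
  rewrite ifF; last first.
    apply/negbTE; rewrite -leqNgt mulSn leq_add2l /bump.
    by rewrite (leq_trans Hab) // leq_addl.
  congr (L _ _); rewrite /bump mulSn subnDl.
  case: (leqP (b * c + i) a) => H1.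
    have H2 : (i <= a - b * c)%N by tolia.
    rewrite H2; tolia.
  have H2 : (a - b * c < i)%N by tolia.
  rewrite leqNgt H2 /=; tolia.
have detE : detn b (Mp c U L') = detn b (fun a y => Mp c U L (bump i a) (bump 0 y)).
  apply: detn_ext => a s _ _; rewrite /Mp /L'; apply: detn_ext => a' x _ _.
  by case: ifP => // _; rewrite bump0n mulSn addnA.
rewrite E1 E2 IH big_ord_recr /= detE addn0 mulnDr !exprD [(c * b)%N]mulnC.
have perm5 (p q r s' t : K) : p * q * s' * (r * t) = r * p * (q * s' * t).
  by rewrite mulrCA !mulrA.
exact: perm5.
Qed.


Lemma inner (J j c : nat) (M : nat -> nat -> K) (T : {poly K}) (lam : K) (r0 s : nat) :
  (j.+1 < J)%N ->
  (forall l, (l <= J)%N ->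
     detn c.+1 (fun a x => M (if (a < c)%N then a else c + l)%N x) = lam * T`_(J - l)) ->
  (r0 < 2 * J - j - 1)%N -> (s < 2 * J - 2 * j - 1)%N ->
  detn c.+1 (fun a x => if (a < c)%N then M a x
       else bar_step J j c.+1 M ((2 * J - 2 * j - 1) * c + r0)%N (s * c.+1 + x)%N)
  = lam * sylv_ent T T^`() J J.-1 j r0 s.
Proof.
move=> HjJ HM Hr0 Hs.
set b := (2 * J - 2 * j - 1)%N.
have Hbar : forall x, (x < c.+1)%N ->
    bar_step J j c.+1 M (b * c + r0)%N (s * c.+1 + x)%N =
    if (s < J - j - 1)%N then
      (if (s <= r0 <= s + J)%N then M (c + (r0 - s))%N x else 0)
    else (if (s - (J - j - 1) <= r0 <= s - (J - j - 1) + J.-1)%N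
          then (J - (r0 - (s - (J - j - 1))))%:R * M (c + (r0 - (s - (J - j - 1))))%N x
          else 0).
  move=> x Hx; rewrite /bar_step /= -/b.
  have -> : ((s * c.+1 + x) %/ c.+1 = s)%N by rewrite divnMDl // divn_small // addn0.
  have -> : ((s * c.+1 + x) %% c.+1 = x)%N by rewrite modnMDl modn_small.
  have -> : (s * c.+1 + x < b * c.+1)%N.
    apply: (@leq_trans (s * c.+1 + c.+1)); first by rewrite ltn_add2l.
    by rewrite -mulSnr leq_mul2r Hs orbT.
  rewrite ltn_add2l Hr0 /= ltnNge leq_addr /= addKn.
  by [].
have Hsyl : sylv_ent T T^`() J J.-1 j r0 s =
    if (s < J - j - 1)%N then
      (if (s <= r0 <= s + J)%N then T`_(J - (r0 - s)) else 0)
    else (if (s - (J - j - 1) <= r0 <= s - (J - j - 1) + J.-1)%N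
          then T`_(J - (r0 - (s - (J - j - 1)))) * (J - (r0 - (s - (J - j - 1))))%:R
          else 0).
  rewrite /sylv_ent.
  have -> : (r0 < J + J.-1 - j)%N by tolia.
  have -> : (s < J + J.-1 - 2 * j)%N by tolia.
  have -> : (J.-1 - j = J - j - 1)%N by tolia.
  rewrite /=; case: ifP => // _; case: ifP => // /andP[H1 H2].
  rewrite coef_deriv mulr_natr; congr (_`_ _ *+ _); tolia.
rewrite Hsyl; case Hse: (s < J - j - 1)%N.
  case Hin: (s <= r0 <= s + J)%N.
    rewrite -HM; last by case/andP: Hin => H1 H2; tolia.
    apply: detn_ext => a x Ha Hx; rewrite Hbar // Hse Hin; case: ifP => //.
  rewrite mulr0; apply: (@detn_zero_row _ _ c) => // x Hx.
  by rewrite ltnn Hbar // Hse Hin.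
case Hin: (s - (J - j - 1) <= r0 <= s - (J - j - 1) + J.-1)%N; last first.
  rewrite mulr0; apply: (@detn_zero_row _ _ c) => // x Hx.
  by rewrite ltnn Hbar // Hse Hin.
set l := (r0 - (s - (J - j - 1)))%N.
have Hl : (l <= J)%N by rewrite /l; case/andP: Hin => H1 H2; tolia.
rewrite [T`_ _ * _]mulrC mulrCA -HM // -(@detn_scale_row _ _ c) //.
apply: detn_ext => a x Ha Hx; rewrite Hbar // Hse Hin.
case: (ltnP a c) => Hac.
  by rewrite (ltn_eqF Hac).
have -> : a = c by tolia.
by rewrite eqxx.
Qed.


Lemma subres_ofE (M : nat -> nat -> K) D j : subres_of M D j =
  \sum_(tau < j.+1) detn D (fun a x => M (if (a < D.-1)%N then (a : nat) else (D + j - tau).-1)%N x) *: 'X^tau.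
Proof. by []. Qed.

Lemma step (J j c : nat) (M : nat -> nat -> K) (T : {poly K}) (lam : K) :
  (j.+1 < J)%N ->
  (forall l, (l <= J)%N ->
     detn c.+1 (fun a x => M (if (a < c)%N then a else c + l)%N x) = lam * T`_(J - l)) ->
  subres_of (bar_step J j c.+1 M) ((2 * J - 2 * j - 1) * c.+1) j =
  ((-1) ^+ (c * \sum_(i < 2 * J - 2 * j - 1) i) * lam ^+ (2 * J - 2 * j - 1)) *:
     subres_of (sylv_ent T T^`() J J.-1 j) (J + J.-1 - 2 * j) j.
Proof.
move=> HjJ HM; rewrite !subres_ofE scaler_sumr; apply: eq_bigr => tau _.
rewrite scalerA; congr (_ *: _).
have Htau : (tau <= j)%N by rewrite -ltnS.
set b := (2 * J - 2 * j - 1)%N.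
have b0 : (0 < b)%N by rewrite /b; tolia.
have -> : (J + J.-1 - 2 * j = b)%N by rewrite /b; tolia.
pose phi i := if (i < b.-1)%N then i else (b + j - tau).-1.
pose Lt i x := bar_step J j c.+1 M (b * c + phi i)%N x.
rewrite (@detn_ext _ _ (Wb b c M Lt)); last first.
  move=> a x Ha Hx; rewrite /Wb /Lt /phi.
  have Ebc : (b * c.+1 = b * c + b)%N by rewrite mulnS addnC.
  case: (ltnP a (b * c)) => Hab.
    have -> : (a < (b * c.+1).-1)%N by rewrite Ebc; tolia.
    rewrite /bar_step /= Hx /=.
    have -> : (a < b * c + (2 * J - j - 1))%N by tolia.
    by rewrite Hab.
  congr (bar_step _ _ _ _ _ x).
  case: ifP => H1; case: ifP => H2; rewrite ?Ebc in H1 *;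
  try (move/negbT: H1; rewrite -leqNgt => H1); try (move/negbT: H2; rewrite -leqNgt => H2);
  tolia.
rewrite BL /Mp.
rewrite (@detn_ext _ _ (fun i s => lam * sylv_ent T T^`() J J.-1 j (phi i) s)); last first.
  move=> i s Hi Hs; apply: inner => //.
  rewrite /phi; case: ifP => _; rewrite /b in Hi Hs *; tolia.
by rewrite detn_scale mulrA.
Qed.


Lemma size_deriv0 (p : {poly K}) : [pchar K] =i pred0 -> size p^`() = (size p).-1.
Proof.
move=> ch; have [le1|lt1] := leqP (size p) 1.
  rewrite [p in LHS]size1_polyC // derivC size_poly0.
  by case: (size p) le1 => [|[]].
have [n Hn] : exists n, size p = n.+2.
  by exists (size p).-2; case: (size p) lt1 => [|[|k]].
rewrite Hn /=; apply/eqP; rewrite eqn_leq; apply/andP; split.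
  by rewrite -ltnS -Hn lt_size_deriv // -size_poly_gt0 Hn.
rewrite leqNgt; apply/negP; rewrite ltnS => Hlt.
have := nth_default 0 Hlt; rewrite coef_deriv -mulr_natr => /eqP.
rewrite mulf_eq0 => /orP[].
  have : lead_coef p != 0 by rewrite lead_coef_eq0 -size_poly_gt0 Hn.
  by rewrite lead_coefE Hn /= => /negbTE ->.
by move/(pcharf0P K).1: ch => ->.
Qed.

Lemma coef_subres (M : nat -> nat -> K) D j l : (l <= j)%N ->
  (subres_of M D j)`_l = detn D (fun a x => M (if (a < D.-1)%N then a else (D + j - l).-1)%N x).
Proof.
move=> Hl; rewrite subres_ofE coef_sumMXn.
rewrite (bigD1 (Ordinal (n := j.+1) (m := l) Hl)) ?eqxx //= big1 ?addr0 //.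
move=> i /andP[/eqP Hil Hne]; case/eqP: Hne; exact: ord_inj.
Qed.

End DetN.

Lemma barN_S (K : fieldType) (F G : {poly K}) m n js k j :
  barN F G m n js k.+2 j =
  (((2 * js k.+1 - 2 * j - 1) * (barN F G m n js k.+1 (js k.+1)).1)%N,
   bar_step (js k.+1) j (barN F G m n js k.+1 (js k.+1)).1 (barN F G m n js k.+1 (js k.+1)).2).
Proof.
have -> : barN F G m n js k.+2 j =
  let: (C, M) := barN F G m n js k.+1 (js k.+1) in
  (((2 * js k.+1 - 2 * j - 1) * C)%N, bar_step (js k.+1) j C M) by [].
by case: (barN F G m n js k.+1 (js k.+1)).
Qed.

Lemma ukN (K : fieldType) (F G : {poly K}) m n js k j :
  (barN F G m n js k.+2 j).1 = ukj m n js k.+2 j.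
Proof.
elim: k j => [|k IH] j.
  by rewrite barN_S /ukj /= big_geq // muln1 mulnC.
rewrite barN_S /= IH /ukj /= (big_nat_recr _ _ _ (isT : (2 <= k.+2)%N)) /= /bkj /=.
by rewrite [RHS]mulnC !mulnA.
Qed.

Lemma uk1 (K : fieldType) (F G : {poly K}) m n js :
  (barN F G m n js 1 (js 1)).1 = uk m n js 1.
Proof. by []. Qed.

Lemma dec_last (K : fieldType) (s : seq {poly K}) :
  (forall i, (i.+1 < size s)%N -> (size (nth (0%R : {poly K}) s i.+1) < size (nth (0%R : {poly K}) s i))%N) ->
  (3 <= size s)%N -> (size (last (0%R : {poly K}) s) < size (nth (0%R : {poly K}) s 1))%N.
Proof.
move=> Hd Hs.
have H : forall d, (d.+2 < size s)%N -> (size (nth (0%R : {poly K}) s d.+2) < size (nth (0%R : {poly K}) s 1))%N.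
  elim=> [|d IH] Hd2; first exact: Hd.
  apply: ltn_trans (IH (ltnW Hd2)); exact: Hd.
rewrite -nth_last; have := H (size s - 3)%N.
have -> : ((size s - 3).+2 = (size s).-1)%N by tolia.
by apply; tolia.
Qed.

Section PRSfacts.
Variables (K : fieldType) (F G : {poly K}) (m n t : nat) (Ps : nat -> seq {poly K}).
Hypothesis ch : [pchar K] =i pred0.
Hypothesis sF : size F = m.+1.
Hypothesis sG : size G = n.+1.
Hypothesis n0 : (0 < n)%N.
Hypothesis nm : (n < m)%N.
Hypothesis HP : is_complete_rPRS F G t Ps.

Lemma PRSk k : (1 <= k <= t)%N -> exists A B, is_PRS A B (Ps k).
Proof.
case: HP => [[_ H1] H2 _ _ _] /andP[k1 kt].
case: k k1 kt => [//|[|k]] _ kt; first by exists F, G.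
by do 2 eexists; apply: H2; rewrite kt.
Qed.

Lemma F1 k : (1 <= k)%N -> (k < t)%N -> (jseq m Ps k < (size (nth (0%R : {poly K}) (Ps k) 1)).-1)%N.
Proof.
move=> k1 kt; have Hk : (1 <= k <= t)%N by rewrite k1 ltnW.
have Hk' : (1 <= k < t)%N by rewrite k1 kt.
have [A [B [_ _ Hd _ _]]] := PRSk Hk.
case: HP => _ _ H3 _ H5.
have Hl := dec_last Hd (H5 _ Hk').
have H1 := H3 _ Hk'.
have -> : jseq m Ps k = (size (last (0%R : {poly K}) (Ps k))).-1.
  by rewrite /jseq; case: (k) k1.
by tolia.
Qed.

Lemma F2 k : (2 <= k <= t)%N ->
  (size (nth (0%R : {poly K}) (Ps k) 1)).-1 = (jseq m Ps k.-1).-1.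
Proof.
move=> Hk; case: HP => _ H2 _ _ _.
case: (H2 _ Hk) => [[_ [_ ->]]] _ _ _ _.
rewrite size_deriv0 //; case: k Hk => [|[|k]] //.
Qed.

Lemma F3 : (size (nth (0%R : {poly K}) (Ps 1) 1)).-1 = n.
Proof. by case: HP => [[_ [[_ [_ ->]] _ _ _ _]]] _ _ _ _; rewrite sG. Qed.

Lemma Cpos k : (1 <= k)%N -> (k < t)%N ->
  (0 < (barN F G m n (jseq m Ps) k (jseq m Ps k)).1)%N.
Proof.
elim: k => [//|[|k] IH] _ kt.
  have := F1 (k := 1) isT kt; rewrite F3 /= => H; tolia.
rewrite barN_S /= muln_gt0 IH ?(ltn_trans _ kt) // andbT.
have H2 : (2 <= k.+2 <= t)%N by rewrite /= ltnW.
have := F1 (k := k.+2) isT kt; rewrite (F2 H2) /= => H; tolia.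
Qed.


Lemma barSE k j : barS F G m n (jseq m Ps) k j =
  subres_of (barN F G m n (jseq m Ps) k j).2 (barN F G m n (jseq m Ps) k j).1 j.
Proof. by rewrite /barS; case: (barN F G m n (jseq m Ps) k j). Qed.

Lemma barS_S k j : barS F G m n (jseq m Ps) k.+2 j =
  subres_of (bar_step (jseq m Ps k.+1) j (barN F G m n (jseq m Ps) k.+1 (jseq m Ps k.+1)).1
     (barN F G m n (jseq m Ps) k.+1 (jseq m Ps k.+1)).2)
    ((2 * jseq m Ps k.+1 - 2 * j - 1) * (barN F G m n (jseq m Ps) k.+1 (jseq m Ps k.+1)).1) j.
Proof. by rewrite barSE barN_S. Qed.

Lemma ukE k : uk m n (jseq m Ps) k.+1 = (barN F G m n (jseq m Ps) k.+1 (jseq m Ps k.+1)).1.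
Proof. by case: k => [|k]; [rewrite uk1 | rewrite ukN]. Qed.

Lemma main_rec k : (1 <= k <= t)%N -> forall j,
  (j < (size (nth (0%R : {poly K}) (Ps k) 1)).-1)%N ->
  barS F G m n (jseq m Ps) k j =
    (Rp m n (jseq m Ps) k.-1 ^+ bkj (jseq m Ps) k j * rkj m n (jseq m Ps) k j)
      *: tildeS F G m n (jseq m Ps) k j.
Proof.
elim: k => [//|k IH] Hk j Hj.
case: k IH Hk Hj => [|k] IH Hk Hj.
  by rewrite /bkj /rkj /= expr1 mulr1 scale1r.
set js := jseq m Ps.
have Hk1 : (1 <= k.+1 <= t)%N by rewrite /= ltnW //; case/andP: Hk.
have Hkt : (k.+1 < t)%N by case/andP: Hk.
have IHJ := IH Hk1 (js k.+1) (F1 (k := k.+1) isT Hkt).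
rewrite barS_S.
have := Cpos (k := k.+1) isT Hkt; rewrite -/js.
set C := (barN F G m n js k.+1 (js k.+1)).1.
set M := (barN F G m n js k.+1 (js k.+1)).2.
move: IHJ; rewrite barSE -/js -/C -/M => IHJ.
have EuC : uk m n js k.+1 = C by rewrite ukE.
clearbody C M.
case: C EuC IHJ => [//|c] EuC IHJ _.
set J := js k.+1.
have HjJ : (j.+1 < J)%N.
  have := Hj; rewrite (F2 (k := k.+2) Hk) -/js -/J => H; tolia.
pose lam := @Rp K m n js k.+1. rewrite -/J in IHJ.
have Elam : Rp m n js k ^+ bkj js k.+1 J * rkj m n js k.+1 J = lam by [].
rewrite Elam in IHJ.
rewrite (@step _ J j c M (tildeS F G m n js k.+1 J) lam HjJ); last first.
  move=> l Hl; rewrite -coefZ -IHJ coef_subres ?leq_subr //.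
  apply: detn_ext => a x _ _; congr (M _ x); rewrite /=.
  case: ifP => // _; tolia.
have EE : tildeS F G m n js k.+2 j =
  subres_of (sylv_ent (tildeS F G m n js k.+1 J) (tildeS F G m n js k.+1 J)^`() J J.-1 j)
    (J + J.-1 - 2 * j) j by [].
rewrite EE; congr (_ *: _).
rewrite /= -/lam mulrC; congr (_ * _).
rewrite /rkj /= EuC subSS subn0 /bkj /= -/J.
congr ((-1) ^+ (c * _)).
rewrite -(big_mkord (fun _ => true) (fun i => i)) big_ltn ?add0n //; tolia.
Qed.

End PRSfacts.

Theorem mainTheorem6 (K : fieldType) (F G : {poly K}) (m n t : nat)
    (Ps : nat -> seq {poly K}) :
  [pchar K] =i pred0 ->
  size F = m.+1 -> size G = n.+1 -> (0 < n)%N -> (n < m)%N ->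
  is_complete_rPRS F G t Ps ->
  forall k j : nat, (1 <= k <= t)%N ->
  (j < (size (nth (0%R : {poly K}) (Ps k) 1)).-1)%N ->
  barS F G m n (jseq m Ps) k j =
    (Rp m n (jseq m Ps) k.-1 ^+ bkj (jseq m Ps) k j * rkj m n (jseq m Ps) k j)
      *: tildeS F G m n (jseq m Ps) k j.
Proof.
move=> ch sF sG n0 nm HP k j Hk Hj.
exact: (main_rec ch sF sG n0 nm HP Hk Hj).
Qed.
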